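(* Let $K=h^{-1/3}$ and $L=h^{-4/3}$. Let $x$ be a reference grid point in $\Omega=(-1,1)$ and $\phi$ a smooth function defined in a neighborhood of the grid. Then the scheme $F^{1D,e,\delta}$ is consistent with $F^{1D}$ and has accuracy \[ F^{1D,e,\delta}[\phi](x)-F^{1D}[\phi](x)=\mathcal O(h^{2/3}). \] Moreover, $F^{1D,e,\delta}$ is Lipschitz continuous with constant $C^h=h^{-4/3}+2h^{-10/3}$.
   Context: $F^{1D}[u]=(u_x^2u_{xx})^{1/3}$ (real cube root). With $A(p,q)=(p^2q)^{1/3}$, $A^\delta(p,q)=\operatorname{sgn}(q)\min(\lvert A(p,q)\rvert,K\lvert p\rvert,L\lvert q\rvert)$ ($\operatorname{sgn}(0)=0$), $A^{\delta,\pm}(p,q)=A^\delta(p^\pm,q^\pm)$ where $x^+=\max(x,0)$, $x^-=\min(x,0)$, the scheme on the uniform grid of spacing $h$ is $-F^{1D,e,\delta}[u]=A^{\delta,+}(\lvert u_x^h\rvert^+,-u_{xx}^h)+A^{\delta,-}(-\lvert u_x^h\rvert^-,-u_{xx}^h)$, where $\lvert u_x^h\rvert^+=\max\{\frac{u(x)-u(x+h)}h,\frac{u(x)-u(x-h)}h,0\}$, $-\lvert u_x^h\rvert^-=\min\{\frac{u(x)-u(x+h)}h,\frac{u(x)-u(x-h)}h,0\}$, $u_{xx}^h=\frac{u(x+h)-2u(x)+u(x-h)}{h^2}$. Writing a finite difference operator as $F^h[u](x)=F^h(x,u(x),u(x)-u(\cdot))$, it is Lipschitz continuous with constant $C$ if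 $\lvert F^h(x,r,v(\cdot))-F^h(x,s,w(\cdot))\rvert\le C\max(\lvert r-s\rvert,\lVert v-w\rVert_\infty)$ for all grid points $x$. Consistency with $F$ means $\lim_{h\to0,\,y\to x}F^h[\phi](y)=F[\phi](x)$ for smooth $\phi$. *)

(* Defs.v *)
From Stdlib Require Import Reals Lra.
From Coquelicot Require Import Coquelicot.
Open Scope R_scope.

Definition cbrt (x : R) : R :=
  if Rlt_dec 0 x then Rpower x (1/3)
  else if Rlt_dec x 0 then - Rpower (- x) (1/3) else 0.

Definition sgn (x : R) : R :=
  if Rlt_dec 0 x then 1 else if Rlt_dec x 0 then -1 else 0.

Definition posp (x : R) : R := Rmax x 0.
Definition negp (x : R) : R := Rmin x 0.

Definition Aop (p q : R) : R := cbrt (p ^ 2 * q).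

Definition Adelta (K L p q : R) : R :=
  sgn q * Rmin (Rabs (Aop p q)) (Rmin (K * Rabs p) (L * Rabs q)).

Definition Adelta_p (K L p q : R) : R := Adelta K L (posp p) (posp q).
Definition Adelta_m (K L p q : R) : R := Adelta K L (negp p) (negp q).

(* The scheme written in the form F^h(x, r, v(.)) where, applied to u,
   r = u(x) and v(y) = u(x) - u(y). *)
(* (u(x)-u(x+h))/h and (u(x)-u(x-h))/h *)
Definition Dfwd (h x : R) (v : R -> R) : R := v (x + h) / h.
Definition Dbwd (h x : R) (v : R -> R) : R := v (x - h) / h.
Definition uxPlus (h x : R) (v : R -> R) : R :=
  Rmax (Rmax (Dfwd h x v) (Dbwd h x v)) 0.
Definition uxMinusNeg (h x : R) (v : R -> R) : R :=
  Rmin (Rmin (Dfwd h x v) (Dbwd h x v)) 0.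
(* u_xx^h = (u(x+h) - 2u(x) + u(x-h))/h^2 = -(v(x+h) + v(x-h))/h^2 *)
Definition uxx (h x : R) (v : R -> R) : R := - (v (x + h) + v (x - h)) / h ^ 2.

Definition F1De_op (K L h x r : R) (v : R -> R) : R :=
  - (Adelta_p K L (uxPlus h x v) (- uxx h x v)
     + Adelta_m K L (uxMinusNeg h x v) (- uxx h x v)).

Definition Kh (h : R) : R := Rpower h (- (1/3)).
Definition Lh (h : R) : R := Rpower h (- (4/3)).

Definition F1De (h : R) (u : R -> R) (x : R) : R :=
  F1De_op (Kh h) (Lh h) h x (u x) (fun y => u x - u y).

Definition F1D (u : R -> R) (x : R) : R :=
  cbrt ((Derive u x) ^ 2 * Derive_n u 2 x).

Definition on_lattice (h y : R) : Prop := exists k : Z, y = -1 + IZR k * h.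
Definition grid_point (h x : R) : Prop := -1 < x < 1 /\ on_lattice h x.

Definition Ch (h : R) : R := Rpower h (- (4/3)) + 2 * Rpower h (- (10/3)).

(* Main.v *)
Require Import Defs.
From Stdlib Require Import Reals Lra Psatz.
From Coquelicot Require Import Coquelicot.
Open Scope R_scope.

Lemma sq_pos_form a b : a <> b -> 0 < a^2 + a*b + b^2.
Proof.
  intros H.
  assert (E : a^2 + a*b + b^2 = 3/4*(a+b)^2 + 1/4*(b-a)^2) by field.
  assert (0 < (b-a)^2) by (replace ((b-a)^2) with (Rsqr (b-a)) by (unfold Rsqr; ring); apply Rsqr_pos_lt; lra).
  assert (0 <= (a+b)^2) by apply pow2_ge_0. lra.
Qed.

Lemma cube_lt a b : a < b -> a^3 < b^3.
Proof.
  intros H.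
  assert (H2 : b^3 - a^3 = (b - a) * (a^2 + a*b + b^2)) by ring.
  assert (0 < a^2 + a*b + b^2) by (apply sq_pos_form; lra).
  assert (0 < (b - a) * (a^2 + a*b + b^2)) by (apply Rmult_lt_0_compat; lra).
  lra.
Qed.

Lemma cube_inj a b : a^3 = b^3 -> a = b.
Proof.
  intros H. destruct (Rtotal_order a b) as [H1|[H1|H1]]; auto.
  apply cube_lt in H1; lra. apply cube_lt in H1; lra.
Qed.

Lemma cube_le_inv a b : a^3 <= b^3 -> a <= b.
Proof. intros H. destruct (Rle_or_lt a b); auto. apply cube_lt in H0. lra. Qed.

Lemma cube_lt_inv a b : a^3 < b^3 -> a < b.
Proof. intros H. destruct (Rlt_or_le a b); auto.
  destruct (Req_dec a b). subst; lra. assert (b < a) by lra. apply cube_lt in H2. lra. Qed.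

Lemma Rpower_pos x y : 0 < Rpower x y.
Proof. unfold Rpower. apply exp_pos. Qed.

Lemma Rpower_third_cube x : 0 < x -> (Rpower x (1/3))^3 = x.
Proof.
  intros Hx. rewrite <- Rpower_pow by apply Rpower_pos.
  rewrite Rpower_mult. replace (1/3 * INR 3) with 1 by (simpl; field).
  apply Rpower_1; auto.
Qed.

Lemma cbrt_cube x : (cbrt x)^3 = x.
Proof.
  unfold cbrt. destruct (Rlt_dec 0 x).
  - apply Rpower_third_cube; auto.
  - destruct (Rlt_dec x 0).
    + replace ((- Rpower (- x) (1/3))^3) with (- (Rpower (-x) (1/3))^3) by ring.
      rewrite Rpower_third_cube; lra.
    + assert (x = 0) by lra. subst. ring.
Qed.

Lemma cbrt_unique x y : y^3 = x -> cbrt x = y.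
Proof. intros H. apply cube_inj. rewrite cbrt_cube. auto. Qed.

Lemma cbrt_le x y : x <= y -> cbrt x <= cbrt y.
Proof. intros H. apply cube_le_inv. rewrite !cbrt_cube. auto. Qed.

Lemma cbrt_0 : cbrt 0 = 0.
Proof. apply cbrt_unique. ring. Qed.

Lemma cbrt_nonneg x : 0 <= x -> 0 <= cbrt x.
Proof. intros. rewrite <- cbrt_0. apply cbrt_le; auto. Qed.

Lemma cbrt_nonpos x : x <= 0 -> cbrt x <= 0.
Proof. intros. rewrite <- cbrt_0. apply cbrt_le; auto. Qed.

Lemma cbrt_abs x : cbrt (Rabs x) = Rabs (cbrt x).
Proof. apply cbrt_unique. rewrite RPow_abs, cbrt_cube. auto. Qed.

Lemma cbrt_abs_cube x : (cbrt (Rabs x))^3 = Rabs x.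
Proof. apply cbrt_cube. Qed.

Lemma Aop_abs p q : Rabs (Aop p q) = (cbrt (Rabs p))^2 * cbrt (Rabs q).
Proof.
  unfold Aop.
  rewrite (cbrt_unique (p^2*q) ((cbrt p)^2 * cbrt q)).
  - rewrite Rabs_mult, <- RPow_abs, !cbrt_abs. auto.
  - replace (((cbrt p)^2 * cbrt q)^3) with (((cbrt p)^3)^2 * (cbrt q)^3) by ring.
    rewrite !cbrt_cube. auto.
Qed.

Definition gfun (K L a b : R) : R := Rmin (Rabs (Aop a b)) (Rmin (K * Rabs a) (L * Rabs b)).
Definition gst (K L s t : R) : R := Rmin (s^2*t) (Rmin (K*s^3) (L*t^3)).

Lemma gfun_gst K L a b : gfun K L a b = gst K L (cbrt (Rabs a)) (cbrt (Rabs b)).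
Proof. unfold gfun, gst. rewrite Aop_abs, !cbrt_abs_cube. auto. Qed.

Lemma gfun_b0 K L a : 0 <= K -> gfun K L a 0 = 0.
Proof.
  intros HK. unfold gfun. rewrite Rabs_R0, Rmult_0_r.
  assert (0 <= K * Rabs a) by (apply Rmult_le_pos; auto; apply Rabs_pos).
  assert (0 <= Rabs (Aop a 0)) by apply Rabs_pos.
  unfold Rmin; repeat destruct Rle_dec; lra.
Qed.

Lemma gfun_nonneg K L a b : 0 <= K -> 0 <= L -> 0 <= gfun K L a b.
Proof.
  intros HK HL. unfold gfun.
  assert (0 <= K * Rabs a) by (apply Rmult_le_pos; auto; apply Rabs_pos).
  assert (0 <= L * Rabs b) by (apply Rmult_le_pos; auto; apply Rabs_pos).
  assert (0 <= Rabs (Aop a b)) by apply Rabs_pos.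
  unfold Rmin; repeat destruct Rle_dec; lra.
Qed.

Lemma gfun_leL K L a b : gfun K L a b <= L * Rabs b.
Proof. unfold gfun. unfold Rmin; repeat destruct Rle_dec; lra. Qed.

Lemma posp_nonneg x : 0 <= posp x.
Proof. unfold posp, Rmax; destruct Rle_dec; lra. Qed.
Lemma negp_nonpos x : negp x <= 0.
Proof. unfold negp, Rmin; destruct Rle_dec; lra. Qed.

Lemma Adelta_p_eq K L P Q : 0 <= K -> Adelta_p K L P Q = gfun K L (posp P) (posp Q).
Proof.
  intros HK. unfold Adelta_p, Adelta. fold (gfun K L (posp P) (posp Q)).
  unfold sgn. destruct (Rlt_dec 0 (posp Q)). ring.
  assert (posp Q = 0) by (generalize (posp_nonneg Q); lra).
  rewrite H, gfun_b0; auto. ring.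
Qed.

Lemma Adelta_m_eq K L P Q : 0 <= K -> Adelta_m K L P Q = - gfun K L (negp P) (negp Q).
Proof.
  intros HK. unfold Adelta_m, Adelta. fold (gfun K L (negp P) (negp Q)).
  unfold sgn. destruct (Rlt_dec 0 (negp Q)). generalize (negp_nonpos Q); lra.
  destruct (Rlt_dec (negp Q) 0). ring.
  assert (negp Q = 0) by lra. rewrite H, gfun_b0; auto. ring.
Qed.

Lemma F1De_op_eq K L h x r v : 0 <= K ->
  F1De_op K L h x r v = - gfun K L (posp (uxPlus h x v)) (posp (- uxx h x v))
                        + gfun K L (negp (uxMinusNeg h x v)) (negp (- uxx h x v)).
Proof. intros HK. unfold F1De_op. rewrite Adelta_p_eq, Adelta_m_eq; auto. ring. Qed.

Lemma Lp1 K t s s' : 0 <= t -> 0 <= K -> 0 <= s <= s' ->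
  Rmin (s^2*t) (K*s^3) <= Rmin (s'^2*t) (K*s'^3) <= Rmin (s^2*t) (K*s^3) + K*(s'^3 - s^3).
Proof.
  intros Ht HK Hs.
  assert (H2 : s^2 <= s'^2) by (apply pow_incr; lra).
  assert (H3 : s^3 <= s'^3) by (apply pow_incr; lra).
  split.
  - apply Rmin_glb.
    + apply Rle_trans with (s^2*t); [apply Rmin_l|]. apply Rmult_le_compat_r; auto.
    + apply Rle_trans with (K*s^3); [apply Rmin_r|]. apply Rmult_le_compat_l; auto.
  - destruct (Rle_dec (s^2*t) (K*s^3)) as [Hc|Hc].
    + rewrite (Rmin_left _ _ Hc).
      destruct (Req_dec s 0) as [Hs0|Hs0].
      * subst s. apply Rle_trans with (K*s'^3); [apply Rmin_r|]. right; ring.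
      * assert (Hsp : 0 < s^2) by (apply pow_lt; lra).
        assert (HtK : t <= K*s).
        { apply (Rmult_le_reg_l (s^2)); auto. replace (s^2*(K*s)) with (K*s^3) by ring. lra. }
        apply Rle_trans with (s'^2*t); [apply Rmin_l|].
        assert (E1 : t*(s'^2 - s^2) <= K*s*(s'^2-s^2)) by (apply Rmult_le_compat_r; lra).
        assert (E2 : 0 <= K*s'^2*(s'-s)) by (apply Rmult_le_pos; [apply Rmult_le_pos; [lra|apply pow2_ge_0]|lra]).
        assert (E3 : K*(s'^3 - s^3) = K*s*(s'^2-s^2) + K*s'^2*(s'-s)) by ring.
        assert (E4 : s'^2*t = s^2*t + t*(s'^2-s^2)) by ring.
        lra.
    + assert (Hc' : K*s^3 <= s^2*t) by lra. rewrite (Rmin_right _ _ Hc').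
      apply Rle_trans with (K*s'^3); [apply Rmin_r|]. lra.
Qed.

Lemma Lq1 L s t t' : 0 <= s -> 0 <= L -> 0 <= t <= t' ->
  Rmin (s^2*t) (L*t^3) <= Rmin (s^2*t') (L*t'^3) <= Rmin (s^2*t) (L*t^3) + L*(t'^3 - t^3).
Proof.
  intros Hs HL Ht.
  assert (H3 : t^3 <= t'^3) by (apply pow_incr; lra).
  assert (Hs2 : 0 <= s^2) by apply pow2_ge_0.
  split.
  - apply Rmin_glb.
    + apply Rle_trans with (s^2*t); [apply Rmin_l|]. apply Rmult_le_compat_l; lra.
    + apply Rle_trans with (L*t^3); [apply Rmin_r|]. apply Rmult_le_compat_l; auto.
  - destruct (Rle_dec (s^2*t) (L*t^3)) as [Hc|Hc].
    + rewrite (Rmin_left _ _ Hc).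
      destruct (Req_dec t 0) as [Ht0|Ht0].
      * subst t. apply Rle_trans with (L*t'^3); [apply Rmin_r|]. right; ring.
      * assert (Htp : 0 < t) by lra.
        assert (HsL : s^2 <= L*t^2).
        { apply (Rmult_le_reg_r t); auto. replace (L*t^2*t) with (L*t^3) by ring. lra. }
        apply Rle_trans with (s^2*t'); [apply Rmin_l|].
        assert (E1 : s^2*(t'-t) <= L*t^2*(t'-t)) by (apply Rmult_le_compat_r; lra).
        assert (E2 : 0 <= L*t'*(t'^2-t^2)).
        { apply Rmult_le_pos; [apply Rmult_le_pos; lra|].
          assert (t^2 <= t'^2) by (apply pow_incr; lra). lra. }
        assert (E3 : L*(t'^3 - t^3) = L*t^2*(t'-t) + L*t'*(t'^2-t^2)) by ring.
        assert (E4 : s^2*t' = s^2*t + s^2*(t'-t)) by ring.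
        lra.
    + assert (Hc' : L*t^3 <= s^2*t) by lra. rewrite (Rmin_right _ _ Hc').
      apply Rle_trans with (L*t'^3); [apply Rmin_r|]. lra.
Qed.

Lemma Rabs_le_of a b c : -c <= a - b <= c -> Rabs (a - b) <= c.
Proof. intros. apply Rabs_le. lra. Qed.

Lemma Lp K t s s' : 0 <= t -> 0 <= K -> 0 <= s -> 0 <= s' ->
  Rabs (Rmin (s^2*t) (K*s^3) - Rmin (s'^2*t) (K*s'^3)) <= K * Rabs (s^3 - s'^3).
Proof.
  intros Ht HK Hs Hs'. destruct (Rle_dec s s').
  - destruct (Lp1 K t s s') as [A B]; try lra.
    assert (s^3 <= s'^3) by (apply pow_incr; lra).
    rewrite (Rabs_left1 (s^3 - s'^3)) by lra. apply Rabs_le_of. nra.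
  - destruct (Lp1 K t s' s) as [A B]; try lra.
    assert (s'^3 <= s^3) by (apply pow_incr; lra).
    rewrite (Rabs_right (s^3 - s'^3)) by lra. apply Rabs_le_of. nra.
Qed.

Lemma Lq L s t t' : 0 <= s -> 0 <= L -> 0 <= t -> 0 <= t' ->
  Rabs (Rmin (s^2*t) (L*t^3) - Rmin (s^2*t') (L*t'^3)) <= L * Rabs (t^3 - t'^3).
Proof.
  intros Hs HL Ht Ht'. destruct (Rle_dec t t').
  - destruct (Lq1 L s t t') as [A B]; try lra.
    assert (t^3 <= t'^3) by (apply pow_incr; lra).
    rewrite (Rabs_left1 (t^3 - t'^3)) by lra. apply Rabs_le_of. nra.
  - destruct (Lq1 L s t' t) as [A B]; try lra.
    assert (t'^3 <= t^3) by (apply pow_incr; lra).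
    rewrite (Rabs_right (t^3 - t'^3)) by lra. apply Rabs_le_of. nra.
Qed.

Lemma Rmin_lip x y c : Rabs (Rmin x c - Rmin y c) <= Rabs (x - y).
Proof. unfold Rmin; repeat destruct Rle_dec; unfold Rabs; repeat destruct Rcase_abs; lra. Qed.

Lemma gst_alt1 K L s t : gst K L s t = Rmin (Rmin (s^2*t) (K*s^3)) (L*t^3).
Proof. unfold gst, Rmin; repeat destruct Rle_dec; lra. Qed.
Lemma gst_alt2 K L s t : gst K L s t = Rmin (Rmin (s^2*t) (L*t^3)) (K*s^3).
Proof. unfold gst, Rmin; repeat destruct Rle_dec; lra. Qed.

Lemma gst_lip K L s t s' t' : 0 <= K -> 0 <= L -> 0 <= s -> 0 <= t -> 0 <= s' -> 0 <= t' ->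
  Rabs (gst K L s t - gst K L s' t') <= K * Rabs (s^3 - s'^3) + L * Rabs (t^3 - t'^3).
Proof.
  intros.
  replace (gst K L s t - gst K L s' t') with
    ((gst K L s t - gst K L s' t) + (gst K L s' t - gst K L s' t')) by ring.
  eapply Rle_trans; [apply Rabs_triang|]. apply Rplus_le_compat.
  - rewrite !gst_alt1. eapply Rle_trans; [apply Rmin_lip|]. apply Lp; auto.
  - rewrite !gst_alt2. eapply Rle_trans; [apply Rmin_lip|]. apply Lq; auto.
Qed.

Lemma gfun_lip K L a b a' b' : 0 <= K -> 0 <= L ->
  Rabs (gfun K L a b - gfun K L a' b') <= K * Rabs (a - a') + L * Rabs (b - b').
Proof.
  intros HK HL. rewrite !gfun_gst.
  eapply Rle_trans; [apply gst_lip; auto; apply cbrt_nonneg; apply Rabs_pos|].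
  rewrite !cbrt_abs_cube. apply Rplus_le_compat; apply Rmult_le_compat_l; auto;
  apply Rabs_triang_inv2.
Qed.

Lemma posp_lip x y : Rabs (posp x - posp y) <= Rabs (x - y).
Proof. unfold posp, Rmax; repeat destruct Rle_dec; unfold Rabs; repeat destruct Rcase_abs; lra. Qed.
Lemma negp_lip x y : Rabs (negp x - negp y) <= Rabs (x - y).
Proof. unfold negp, Rmin; repeat destruct Rle_dec; unfold Rabs; repeat destruct Rcase_abs; lra. Qed.
Lemma posp_of_nonpos x : x <= 0 -> posp x = 0.
Proof. unfold posp, Rmax; destruct Rle_dec; lra. Qed.
Lemma negp_of_nonneg x : 0 <= x -> negp x = 0.
Proof. unfold negp, Rmin; destruct Rle_dec; lra. Qed.
Lemma posp_of_nonneg x : 0 <= x -> posp x = x.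
Proof. unfold posp, Rmax; destruct Rle_dec; lra. Qed.
Lemma negp_of_nonpos x : x <= 0 -> negp x = x.
Proof. unfold negp, Rmin; destruct Rle_dec; lra. Qed.

Lemma lip_abs K L P N Q P' N' Q' e1 e2 : 0 <= K -> 0 <= L ->
  Rabs (P - P') <= e1 -> Rabs (N - N') <= e1 -> Rabs (Q - Q') <= e2 ->
  Rabs ((- gfun K L (posp P) (posp Q) + gfun K L (negp N) (negp Q))
      - (- gfun K L (posp P') (posp Q') + gfun K L (negp N') (negp Q'))) <= K * e1 + L * e2.
Proof.
  intros HK HL H1 H2 H3.
  assert (e1p : 0 <= e1) by (eapply Rle_trans; [apply Rabs_pos|eauto]).
  assert (0 <= K * e1) by (apply Rmult_le_pos; auto).
  assert (0 <= L * e2) by (apply Rmult_le_pos; auto; eapply Rle_trans; [apply Rabs_pos|eauto]).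
  destruct (Rle_dec 0 Q) as [HQ|HQ]; destruct (Rle_dec 0 Q') as [HQ'|HQ'].
  - rewrite !(negp_of_nonneg Q), !(negp_of_nonneg Q'), !gfun_b0; auto.
    replace (- gfun K L (posp P) (posp Q) + 0 - (- gfun K L (posp P') (posp Q') + 0))
      with (- (gfun K L (posp P) (posp Q) - gfun K L (posp P') (posp Q'))) by ring.
    rewrite Rabs_Ropp. eapply Rle_trans; [apply gfun_lip; auto|].
    apply Rplus_le_compat; apply Rmult_le_compat_l; auto.
    eapply Rle_trans; [apply posp_lip|auto].
    eapply Rle_trans; [apply posp_lip|auto].
  - rewrite (negp_of_nonneg Q), (posp_of_nonpos Q'), !gfun_b0 by (auto; lra).
    rewrite (posp_of_nonneg Q) by auto. rewrite (negp_of_nonpos Q') by lra.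
    generalize (gfun_nonneg K L (posp P) Q HK HL) (gfun_leL K L (posp P) Q)
               (gfun_nonneg K L (negp N') Q' HK HL) (gfun_leL K L (negp N') Q').
    rewrite (Rabs_right Q) by lra. rewrite (Rabs_left Q') by lra.
    rewrite Rabs_right in H3 by lra.
    intros. apply Rabs_le. split; nra.
  - rewrite (posp_of_nonpos Q), (negp_of_nonneg Q'), !gfun_b0 by (auto; lra).
    rewrite (posp_of_nonneg Q') by auto. rewrite (negp_of_nonpos Q) by lra.
    generalize (gfun_nonneg K L (posp P') Q' HK HL) (gfun_leL K L (posp P') Q')
               (gfun_nonneg K L (negp N) Q HK HL) (gfun_leL K L (negp N) Q).
    rewrite (Rabs_right Q') by lra. rewrite (Rabs_left Q) by lra.
    rewrite Rabs_left in H3 by lra.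
    intros. apply Rabs_le. split; nra.
  - rewrite !(posp_of_nonpos Q), !(posp_of_nonpos Q'), !gfun_b0 by (auto; lra).
    replace (- 0 + gfun K L (negp N) (negp Q) - (- 0 + gfun K L (negp N') (negp Q')))
      with (gfun K L (negp N) (negp Q) - gfun K L (negp N') (negp Q')) by ring.
    eapply Rle_trans; [apply gfun_lip; auto|].
    apply Rplus_le_compat; apply Rmult_le_compat_l; auto.
    eapply Rle_trans; [apply negp_lip|auto].
    eapply Rle_trans; [apply negp_lip|auto].
Qed.

Lemma Rmax_lip a b c d e : Rabs (a - c) <= e -> Rabs (b - d) <= e -> Rabs (Rmax a b - Rmax c d) <= e.
Proof. intros H1 H2. apply Rabs_le. apply Rabs_le_between in H1. apply Rabs_le_between in H2.
  unfold Rmax; repeat destruct Rle_dec; lra. Qed.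
Lemma Rmin_lip2 a b c d e : Rabs (a - c) <= e -> Rabs (b - d) <= e -> Rabs (Rmin a b - Rmin c d) <= e.
Proof. intros H1 H2. apply Rabs_le. apply Rabs_le_between in H1. apply Rabs_le_between in H2.
  unfold Rmin; repeat destruct Rle_dec; lra. Qed.

Lemma lip_scheme K L h x r s v w M : 0 <= K -> 0 <= L -> 0 < h ->
  Rabs (v (x+h) - w (x+h)) <= M -> Rabs (v (x-h) - w (x-h)) <= M ->
  Rabs (F1De_op K L h x r v - F1De_op K L h x s w) <= K * (M/h) + L * (2*M/h^2).
Proof.
  intros HK HL Hh H1 H2. rewrite !F1De_op_eq by auto.
  assert (D1 : Rabs (Dfwd h x v - Dfwd h x w) <= M/h).
  { unfold Dfwd. replace (v (x+h)/h - w (x+h)/h) with ((v (x+h) - w (x+h)) / h) by (field; lra).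
    unfold Rdiv. rewrite Rabs_mult, (Rabs_right (/h)) by (apply Rle_ge, Rlt_le, Rinv_0_lt_compat; auto).
    apply Rmult_le_compat_r; auto. apply Rlt_le, Rinv_0_lt_compat; auto. }
  assert (D2 : Rabs (Dbwd h x v - Dbwd h x w) <= M/h).
  { unfold Dbwd. replace (v (x-h)/h - w (x-h)/h) with ((v (x-h) - w (x-h)) / h) by (field; lra).
    unfold Rdiv. rewrite Rabs_mult, (Rabs_right (/h)) by (apply Rle_ge, Rlt_le, Rinv_0_lt_compat; auto).
    apply Rmult_le_compat_r; auto. apply Rlt_le, Rinv_0_lt_compat; auto. }
  assert (M0 : 0 <= M) by (eapply Rle_trans; [apply Rabs_pos|eauto]).
  assert (Mh : 0 <= M/h) by (apply Rdiv_le_0_compat; auto).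
  apply lip_abs; auto.
  - unfold uxPlus. apply Rmax_lip; [apply Rmax_lip; auto|]. rewrite Rminus_0_r, Rabs_R0; auto.
  - unfold uxMinusNeg. apply Rmin_lip2; [apply Rmin_lip2; auto|]. rewrite Rminus_0_r, Rabs_R0; auto.
  - unfold uxx.
    replace (- (- (v (x + h) + v (x - h)) / h ^ 2) - - (- (w (x + h) + w (x - h)) / h ^ 2))
      with (((v (x+h) - w (x+h)) + (v (x-h) - w (x-h))) / h^2) by (field; lra).
    assert (0 < h^2) by (apply pow_lt; auto).
    unfold Rdiv. rewrite Rabs_mult, (Rabs_right (/h^2)) by (apply Rle_ge, Rlt_le, Rinv_0_lt_compat; auto).
    apply Rmult_le_compat_r; [apply Rlt_le, Rinv_0_lt_compat; auto|].
    eapply Rle_trans; [apply Rabs_triang|]. lra.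
Qed.

Lemma Rpower_third_n h n : 0 < h -> Rpower h (INR n / 3) = (Rpower h (1/3))^n.
Proof.
  intros Hh. rewrite <- Rpower_pow by apply Rpower_pos. rewrite Rpower_mult. f_equal. lra.
Qed.

Lemma eta_facts h : 0 < h -> exists e, 0 < e /\ e^3 = h /\ Rpower h (2/3) = e^2 /\
  Kh h = / e /\ Lh h = / e^4 /\ Ch h = / e^4 + 2 / e^10.
Proof.
  intros Hh. exists (Rpower h (1/3)). repeat split.
  - apply Rpower_pos.
  - apply Rpower_third_cube; auto.
  - rewrite <- Rpower_third_n by auto. f_equal; try (rewrite INR_IZR_INZ; simpl; reflexivity).
  - unfold Kh. rewrite Rpower_Ropp. reflexivity.
  - unfold Lh. rewrite Rpower_Ropp. f_equal.
    rewrite <- Rpower_third_n by auto. f_equal; try (rewrite INR_IZR_INZ; simpl; reflexivity).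
  - unfold Ch. rewrite !Rpower_Ropp. rewrite <- !Rpower_third_n by auto.
    replace (INR 4 / 3) with (4/3) by (rewrite INR_IZR_INZ; simpl; reflexivity).
    replace (INR 10 / 3) with (10/3) by (rewrite INR_IZR_INZ; simpl; reflexivity).
    reflexivity.
Qed.

Lemma lattice_shift h y d : on_lattice h y -> on_lattice h (y + IZR d * h).
Proof. intros [k Hk]. exists (k + d)%Z. rewrite Hk, plus_IZR. ring. Qed.

Lemma lip_part : forall h : R, 0 < h ->
     forall (x r s : R) (v w : R -> R) (M : R),
       grid_point h x ->
       (forall y : R, on_lattice h y -> Rabs (v y - w y) <= M) ->
       Rabs (F1De_op (Kh h) (Lh h) h x r v - F1De_op (Kh h) (Lh h) h x s w)
         <= Ch h * Rmax (Rabs (r - s)) M.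
Proof.
  intros h Hh x r s v w M [_ Hx] HM.
  assert (H1 : Rabs (v (x+h) - w (x+h)) <= M).
  { apply HM. replace (x + h) with (x + IZR 1 * h) by (simpl; ring). apply lattice_shift; auto. }
  assert (H2 : Rabs (v (x-h) - w (x-h)) <= M).
  { apply HM. replace (x - h) with (x + IZR (-1) * h) by (simpl; ring). apply lattice_shift; auto. }
  assert (M0 : 0 <= M) by (eapply Rle_trans; [apply Rabs_pos|eauto]).
  destruct (eta_facts h Hh) as [e [He [He3 [_ [HK [HL HC]]]]]].
  rewrite HK, HL, HC.
  eapply Rle_trans; [apply lip_scheme; eauto|].
  - apply Rlt_le, Rinv_0_lt_compat; auto.
  - apply Rlt_le, Rinv_0_lt_compat; apply pow_lt; auto.
  - subst h.
    assert (0 < e^4) by (apply pow_lt; auto).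
    assert (0 < e^10) by (apply pow_lt; auto).
    replace (/ e * (M / e ^ 3) + / e ^ 4 * (2 * M / (e ^ 3) ^ 2)) with ((/ e^4 + 2 / e^10) * M)
      by (field; lra).
    apply Rmult_le_compat_l; [|apply Rmax_r].
    assert (0 < / e^4) by (apply Rinv_0_lt_compat; auto).
    assert (0 < 2 / e^10) by (apply Rdiv_lt_0_compat; lra). lra.
Qed.

Lemma cube_diff x y c : 0 <= x -> 0 <= y -> 0 <= c -> Rabs (x^3 - y^3) <= c^3 -> Rabs (x - y) <= c.
Proof.
  intros Hx Hy Hc H.
  destruct (Rle_dec y x).
  - rewrite Rabs_right in * by (try assert (y^3 <= x^3) by (apply pow_incr; lra); lra).
    apply cube_le_inv.
    assert (E : x^3 - y^3 - (x-y)^3 = 3*x*y*(x-y)) by ring.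
    assert (0 <= 3*x*y*(x-y)) by (apply Rmult_le_pos; [nra|lra]). lra.
  - assert (y^3 >= x^3) by (apply Rle_ge, pow_incr; lra).
    rewrite Rabs_left1 in * by lra. apply cube_le_inv.
    assert (E : y^3 - x^3 - (y-x)^3 = 3*x*y*(y-x)) by ring.
    assert (0 <= 3*x*y*(y-x)) by (apply Rmult_le_pos; [nra|lra]).
    replace (- (x - y)) with (y - x) by ring. lra.
Qed.

Lemma sq_diff_aux y d : 0 <= y -> 0 <= d -> ((y+d)^2 - y^2)^3 <= ((y+d)^3 - y^3)^2.
Proof.
  intros Hy Hd.
  assert (E : ((y+d)^3 - y^3)^2 - ((y+d)^2 - y^2)^3 = d^2*(9*y^4 + 10*y^3*d + 3*y^2*d^2)) by ring.
  assert (0 <= d^2*(9*y^4 + 10*y^3*d + 3*y^2*d^2)).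
  { apply Rmult_le_pos. apply pow2_ge_0.
    assert (0 <= y^4) by (apply pow_le; auto).
    assert (0 <= y^3*d) by (apply Rmult_le_pos; [apply pow_le|]; auto).
    assert (0 <= y^2*d^2) by (apply Rmult_le_pos; apply pow2_ge_0). lra. }
  lra.
Qed.

Lemma sq_diff x y c : 0 <= x -> 0 <= y -> 0 <= c -> Rabs (x^3 - y^3) <= c^3 -> Rabs (x^2 - y^2) <= c^2.
Proof.
  intros Hx Hy Hc H.
  assert (K : forall a b, 0 <= b <= a -> a^3 - b^3 <= c^3 -> a^2 - b^2 <= c^2).
  { intros a b Hab Hle. apply cube_le_inv.
    pose proof (sq_diff_aux b (a - b) ltac:(lra) ltac:(lra)) as HH.
    replace (b + (a - b)) with a in HH by ring.
    assert (0 <= a^3 - b^3) by (assert (b^3 <= a^3) by (apply pow_incr; lra); lra).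
    assert ((a^3 - b^3)^2 <= (c^3)^2) by (apply pow_incr; lra).
    replace ((c^2)^3) with ((c^3)^2) by ring. lra. }
  destruct (Rle_dec y x).
  - assert (y^2 <= x^2) by (apply pow_incr; lra).
    rewrite Rabs_right by lra. apply K; [lra|].
    apply Rabs_le_between in H. lra.
  - assert (x^2 <= y^2) by (apply pow_incr; lra).
    rewrite Rabs_left1 by lra. replace (- (x^2 - y^2)) with (y^2 - x^2) by ring.
    apply K; [lra|]. apply Rabs_le_between in H. lra.
Qed.

Lemma tr1 e s t : 0 < e -> 0 <= s -> 0 <= t -> / e * s^3 <= s^2*t -> s^2*t <= e^2*t^3.
Proof.
  intros He Hs Ht H.
  assert (H' : s^3 <= e*(s^2*t)).
  { apply (Rmult_le_compat_l e) in H; [|lra]. rewrite <- Rmult_assoc, Rinv_r, Rmult_1_l in H by lra. auto. }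
  destruct (Req_dec s 0). { subst. simpl. assert (0 <= e^2*t^3) by (apply Rmult_le_pos; apply pow_le; lra). lra. }
  assert (0 < s^2) by (apply pow_lt; lra).
  assert (s <= e*t).
  { apply (Rmult_le_reg_l (s^2)); auto. replace (s^2*s) with (s^3) by ring.
    replace (s^2*(e*t)) with (e*(s^2*t)) by ring. auto. }
  assert (s^2 <= (e*t)^2) by (apply pow_incr; lra).
  replace (e^2*t^3) with ((e*t)^2*t) by ring. apply Rmult_le_compat_r; auto.
Qed.

Lemma tr2 e s t : 0 < e -> 0 <= s -> 0 <= t -> / e^4 * t^3 <= s^2*t -> s^2*t <= e^2*s^3.
Proof.
  intros He Hs Ht H.
  assert (He4 : 0 < e^4) by (apply pow_lt; auto).
  assert (H' : t^3 <= e^4*(s^2*t)).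
  { apply (Rmult_le_compat_l (e^4)) in H; [|lra]. rewrite <- Rmult_assoc, Rinv_r, Rmult_1_l in H by lra. auto. }
  destruct (Req_dec t 0). { subst. simpl. assert (0 <= e^2*s^3) by (apply Rmult_le_pos; apply pow_le; lra). lra. }
  assert (Htp : 0 < t) by lra.
  assert (t^2 <= (e^2*s)^2).
  { apply (Rmult_le_reg_r t); auto. replace (t^2*t) with (t^3) by ring.
    replace ((e^2*s)^2*t) with (e^4*(s^2*t)) by ring. auto. }
  assert (t <= e^2*s).
  { destruct (Rle_or_lt t (e^2*s)); auto.
    assert (0 <= e^2*s) by (apply Rmult_le_pos; [apply pow_le|]; lra).
    assert ((e^2*s)^2 < t^2) by (apply pow_lt_compat_l; [lra|lia]) || nra. lra. }
  replace (e^2*s^3) with (s^2*(e^2*s)) by ring. apply Rmult_le_compat_l; auto. apply pow2_ge_0.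
Qed.

Lemma gst_nonneg K L s t : 0 <= K -> 0 <= L -> 0 <= s -> 0 <= t -> 0 <= gst K L s t.
Proof.
  intros. unfold gst.
  assert (0 <= s^2*t) by (apply Rmult_le_pos; [apply pow2_ge_0|auto]).
  assert (0 <= K*s^3) by (apply Rmult_le_pos; [auto|apply pow_le; auto]).
  assert (0 <= L*t^3) by (apply Rmult_le_pos; [auto|apply pow_le; auto]).
  unfold Rmin; repeat destruct Rle_dec; lra.
Qed.

Lemma trunc e s t : 0 < e -> 0 <= s -> 0 <= t ->
  0 <= s^2*t - gst (/e) (/e^4) s t <= e^2*(s^3+t^3).
Proof.
  intros He Hs Ht.
  assert (He4 : 0 < e^4) by (apply pow_lt; auto).
  assert (0 <= / e * s^3) by (apply Rmult_le_pos; [apply Rlt_le, Rinv_0_lt_compat; auto|apply pow_le; auto]).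
  assert (0 <= / e^4 * t^3) by (apply Rmult_le_pos; [apply Rlt_le, Rinv_0_lt_compat; auto|apply pow_le; auto]).
  assert (0 <= e^2*s^3) by (apply Rmult_le_pos; apply pow_le; lra).
  assert (0 <= e^2*t^3) by (apply Rmult_le_pos; apply pow_le; lra).
  unfold gst, Rmin; repeat destruct Rle_dec.
  - lra.
  - lra.
  - assert (s^2*t <= e^2*t^3) by (apply tr1; auto; lra). lra.
  - assert (s^2*t <= e^2*s^3) by (apply tr2; auto; lra). lra.
Qed.

Lemma core s t s' t' e al be S T :
  0 < e <= 1 -> 0 <= al -> 0 <= be -> 0 <= s <= S -> 0 <= t <= T -> 0 <= s' -> 0 <= t' ->
  Rabs (s'^3 - s^3) <= al^3 * e^3 -> Rabs (t'^3 - t^3) <= be^3 * e^6 ->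
  Rabs (gst (/e) (/e^4) s' t' - s^2*t) <= ((S+al)^3 + (T+be)^3 + al^2*(T+be) + S^2*be) * e^2.
Proof.
  intros He Hal Hbe Hs Ht Hs' Ht' H1 H2.
  assert (c1 : Rabs (s' - s) <= al*e).
  { apply cube_diff; try lra. apply Rmult_le_pos; lra. }
  assert (c2 : Rabs (s'^2 - s^2) <= (al*e)^2).
  { apply sq_diff; try lra. apply Rmult_le_pos; lra. }
  assert (c3 : Rabs (t' - t) <= be*e^2).
  { apply cube_diff; try lra. apply Rmult_le_pos; [lra|apply pow2_ge_0]. }
  assert (e2 : 0 < e^2 <= 1) by (split; [apply pow_lt; lra| replace 1 with (1^2) by ring; apply pow_incr; lra]).
  assert (Hs'S : s' <= S + al).
  { apply Rabs_le_between in c1. assert (al*e <= al) by (replace al with (al*1) at 2 by ring; apply Rmult_le_compat_l; lra). lra. }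
  assert (Ht'T : t' <= T + be).
  { apply Rabs_le_between in c3. assert (be*e^2 <= be) by (replace be with (be*1) at 2 by ring; apply Rmult_le_compat_l; lra). lra. }
  destruct (trunc e s' t') as [T1 T2]; try lra.
  assert (T3 : s'^3 + t'^3 <= (S+al)^3 + (T+be)^3).
  { assert (s'^3 <= (S+al)^3) by (apply pow_incr; lra).
    assert (t'^3 <= (T+be)^3) by (apply pow_incr; lra). lra. }
  assert (T4 : e^2*(s'^3+t'^3) <= e^2*((S+al)^3 + (T+be)^3)) by (apply Rmult_le_compat_l; lra).
  assert (P1 : Rabs ((s'^2 - s^2)*t') <= al^2*(T+be)*e^2).
  { rewrite Rabs_mult, (Rabs_right t') by lra.
    replace (al^2*(T+be)*e^2) with ((al*e)^2*(T+be)) by ring.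
    apply Rmult_le_compat; auto; apply Rabs_pos. }
  assert (P2 : Rabs (s^2*(t' - t)) <= S^2*be*e^2).
  { rewrite Rabs_mult, (Rabs_right (s^2)) by (apply Rle_ge, pow2_ge_0).
    replace (S^2*be*e^2) with (S^2*(be*e^2)) by ring.
    apply Rmult_le_compat; auto. apply pow2_ge_0. apply Rabs_pos. apply pow_incr; lra. }
  replace (gst (/ e) (/ e ^ 4) s' t' - s ^ 2 * t) with
    (- (s'^2*t' - gst (/ e) (/ e ^ 4) s' t') + ((s'^2 - s^2)*t' + s^2*(t' - t))) by ring.
  eapply Rle_trans; [apply Rabs_triang|].
  eapply Rle_trans; [apply Rplus_le_compat; [right; apply Rabs_Ropp|apply Rabs_triang]|].
  rewrite Rabs_right by lra.
  assert (E : ((S+al)^3 + (T+be)^3 + al^2*(T+be) + S^2*be) * e^2 =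
              e^2*((S+al)^3 + (T+be)^3) + al^2*(T+be)*e^2 + S^2*be*e^2) by ring.
  rewrite E. lra.
Qed.

Lemma small s t s' t' e al be S :
  0 < e <= 1 -> 0 <= be -> 0 <= s <= S -> 0 <= t -> 0 <= s' <= S + al -> 0 <= t' ->
  t^3 + t'^3 <= be^3 * e^6 ->
  gst (/e) (/e^4) s' t' + s^2*t <= ((S+al)^2 + S^2)*be*e^2.
Proof.
  intros He Hbe Hs Ht Hs' Ht' H.
  assert (0 <= t^3) by (apply pow_le; auto). assert (0 <= t'^3) by (apply pow_le; auto).
  assert (tb : t <= be*e^2) by (apply cube_le_inv; replace ((be*e^2)^3) with (be^3*e^6) by ring; lra).
  assert (t'b : t' <= be*e^2) by (apply cube_le_inv; replace ((be*e^2)^3) with (be^3*e^6) by ring; lra).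
  assert (gst (/e) (/e^4) s' t' <= s'^2*t') by (unfold gst; apply Rmin_l).
  assert (s'^2*t' <= (S+al)^2*(be*e^2)) by (apply Rmult_le_compat; auto; [apply pow2_ge_0|apply pow_incr; lra]).
  assert (s^2*t <= S^2*(be*e^2)) by (apply Rmult_le_compat; auto; [apply pow2_ge_0|apply pow_incr; lra]).
  lra.
Qed.

Definition Cacc (c1 c2 B1 B2 : R) : R :=
  let al := cbrt c1 in let be := cbrt c2 in let S := cbrt B1 in let T := cbrt B2 in
  ((S+al)^3 + (T+be)^3 + al^2*(T+be) + S^2*be) + ((S+al)^2 + S^2)*be.

Lemma Cacc_nonneg c1 c2 B1 B2 : 0 <= c1 -> 0 <= c2 -> 0 <= B1 -> 0 <= B2 -> 0 <= Cacc c1 c2 B1 B2.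
Proof.
  intros. unfold Cacc.
  pose proof (cbrt_nonneg c1 H). pose proof (cbrt_nonneg c2 H0).
  pose proof (cbrt_nonneg B1 H1). pose proof (cbrt_nonneg B2 H2).
  set (a := cbrt c1) in *. set (b := cbrt c2) in *. set (S := cbrt B1) in *. set (T := cbrt B2) in *.
  assert (0 <= (S+a)^3) by (apply pow_le; lra).
  assert (0 <= (T+b)^3) by (apply pow_le; lra).
  assert (0 <= a^2*(T+b)) by (apply Rmult_le_pos; [apply pow2_ge_0|lra]).
  assert (0 <= S^2*b) by (apply Rmult_le_pos; [apply pow2_ge_0|lra]).
  assert (0 <= ((S+a)^2 + S^2)*b) by (apply Rmult_le_pos; [assert (0 <= (S+a)^2) by apply pow2_ge_0; assert (0 <= S^2) by apply pow2_ge_0; lra|lra]).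
  lra.
Qed.

Lemma PN_bounds Df Db p0 c : Rabs (Df + p0) <= c -> Rabs (Db - p0) <= c ->
  Rabs (Rmax (Rmax Df Db) 0 - Rabs p0) <= c /\ Rabs (Rmin (Rmin Df Db) 0 + Rabs p0) <= c.
Proof.
  intros H1 H2. apply Rabs_le_between in H1. apply Rabs_le_between in H2.
  split; apply Rabs_le; unfold Rmax, Rmin, Rabs; repeat destruct Rle_dec; repeat destruct Rcase_abs; lra.
Qed.

Lemma uxPlus_nonneg h x v : 0 <= uxPlus h x v.
Proof. unfold uxPlus. apply Rmax_r. Qed.
Lemma uxMinusNeg_nonpos h x v : uxMinusNeg h x v <= 0.
Proof. unfold uxMinusNeg. apply Rmin_r. Qed.

Lemma acc_scheme e x r v p0 q0 c1 c2 B1 B2 :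
  0 < e <= 1 -> 0 <= c1 -> 0 <= c2 -> Rabs p0 <= B1 -> Rabs q0 <= B2 ->
  Rabs (Dfwd (e^3) x v + p0) <= c1 * e^3 -> Rabs (Dbwd (e^3) x v - p0) <= c1 * e^3 ->
  Rabs (- uxx (e^3) x v + q0) <= c2 * e^6 ->
  Rabs (F1De_op (/e) (/e^4) (e^3) x r v - cbrt (p0^2*q0)) <= Cacc c1 c2 B1 B2 * e^2.
Proof.
  intros He Hc1 Hc2 HB1 HB2 H1 H2 H3.
  assert (HK : 0 <= / e) by (apply Rlt_le, Rinv_0_lt_compat; lra).
  assert (HL : 0 <= / e^4) by (apply Rlt_le, Rinv_0_lt_compat, pow_lt; lra).
  rewrite F1De_op_eq by auto.
  assert (HP : Rabs (uxPlus (e^3) x v - Rabs p0) <= c1*e^3) by (apply (proj1 (PN_bounds _ _ _ _ H1 H2))).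
  assert (HN : Rabs (uxMinusNeg (e^3) x v + Rabs p0) <= c1*e^3) by (apply (proj2 (PN_bounds _ _ _ _ H1 H2))).
  pose proof (uxPlus_nonneg (e^3) x v) as P0.
  pose proof (uxMinusNeg_nonpos (e^3) x v) as N0.
  rewrite (posp_of_nonneg (uxPlus (e^3) x v)) by auto.
  rewrite (negp_of_nonpos (uxMinusNeg (e^3) x v)) by auto.
  change (cbrt (p0^2*q0)) with (Aop p0 q0).
  pose proof (Aop_abs p0 q0) as HA.
  assert (HAp : 0 <= q0 -> 0 <= Aop p0 q0).
  { intros. unfold Aop. apply cbrt_nonneg. apply Rmult_le_pos; auto. apply pow2_ge_0. }
  assert (HAn : q0 <= 0 -> Aop p0 q0 <= 0).
  { intros. unfold Aop. apply cbrt_nonpos. assert (0 <= p0^2) by apply pow2_ge_0. nra. }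
  generalize dependent (uxPlus (e^3) x v). intros P HP P0.
  generalize dependent (uxMinusNeg (e^3) x v). intros N HN N0.
  generalize dependent (- uxx (e^3) x v). intros Q H3.
  generalize dependent (Aop p0 q0). intros A HA HAp HAn.
  rewrite !gfun_gst.
  assert (B1p : 0 <= B1) by (eapply Rle_trans; [apply Rabs_pos|eauto]).
  assert (B2p : 0 <= B2) by (eapply Rle_trans; [apply Rabs_pos|eauto]).
  unfold Cacc.
  pose proof (cbrt_cube c1) as Ea. pose proof (cbrt_cube c2) as Eb.
  pose proof (cbrt_nonneg c1 Hc1) as al0. pose proof (cbrt_nonneg c2 Hc2) as be0.
  pose proof (cbrt_nonneg B1 B1p) as S0. pose proof (cbrt_nonneg B2 B2p) as T0.
  assert (sS : cbrt (Rabs p0) <= cbrt B1) by (apply cbrt_le; auto).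
  assert (tT : cbrt (Rabs q0) <= cbrt B2) by (apply cbrt_le; auto).
  pose proof (cbrt_nonneg (Rabs p0) (Rabs_pos p0)) as s0.
  pose proof (cbrt_nonneg (Rabs q0) (Rabs_pos q0)) as t0.
  pose proof (cbrt_abs_cube p0) as Es. pose proof (cbrt_abs_cube q0) as Et.
  pose proof (cbrt_abs_cube P) as EP. pose proof (cbrt_abs_cube N) as EN. pose proof (cbrt_abs_cube Q) as EQ.
  pose proof (cbrt_nonneg (Rabs P) (Rabs_pos P)) as sP0.
  pose proof (cbrt_nonneg (Rabs N) (Rabs_pos N)) as sN0.
  pose proof (cbrt_nonneg (Rabs Q) (Rabs_pos Q)) as tQ0.
  set (al := cbrt c1) in *. set (be := cbrt c2) in *. set (S := cbrt B1) in *. set (T := cbrt B2) in *.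
  set (s := cbrt (Rabs p0)) in *. set (t := cbrt (Rabs q0)) in *.
  set (sP := cbrt (Rabs P)) in *. set (sN := cbrt (Rabs N)) in *. set (tQ := cbrt (Rabs Q)) in *.
  rewrite (Rabs_right P) in EP by lra. rewrite (Rabs_left1 N) in EN by lra.
  assert (DP : Rabs (sP^3 - s^3) <= al^3*e^3) by (rewrite EP, Es, Ea; auto).
  assert (DN : Rabs (sN^3 - s^3) <= al^3*e^3).
  { rewrite EN, Es, Ea. replace (- N - Rabs p0) with (- (N + Rabs p0)) by ring. rewrite Rabs_Ropp; auto. }
  assert (e1 : al*e <= al) by (replace al with (al*1) at 2 by ring; apply Rmult_le_compat_l; lra).
  assert (sPb : sP <= S + al).
  { assert (Rabs (sP - s) <= al*e) by (apply cube_diff; auto; try (apply Rmult_le_pos; lra); lra).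
    apply Rabs_le_between in H. lra. }
  assert (sNb : sN <= S + al).
  { assert (Rabs (sN - s) <= al*e) by (apply cube_diff; auto; try (apply Rmult_le_pos; lra); lra).
    apply Rabs_le_between in H. lra. }
  assert (e2 : 0 <= e^2) by apply pow2_ge_0.
  assert (K2 : 0 <= ((S+al)^2 + S^2)*be*e^2).
  { apply Rmult_le_pos; auto. apply Rmult_le_pos; auto.
    assert (0 <= (S+al)^2) by apply pow2_ge_0. assert (0 <= S^2) by apply pow2_ge_0. lra. }
  assert (K1 : 0 <= ((S+al)^3 + (T+be)^3 + al^2*(T+be) + S^2*be) * e^2).
  { apply Rmult_le_pos; auto.
    assert (0 <= (S+al)^3) by (apply pow_le; lra).
    assert (0 <= (T+be)^3) by (apply pow_le; lra).
    assert (0 <= al^2*(T+be)) by (apply Rmult_le_pos; [apply pow2_ge_0|lra]).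
    assert (0 <= S^2*be) by (apply Rmult_le_pos; [apply pow2_ge_0|lra]). lra. }
  rewrite Rmult_plus_distr_r.
  assert (gP0 : 0 <= gst (/e) (/e^4) sP tQ) by (apply gst_nonneg; auto).
  assert (gN0 : 0 <= gst (/e) (/e^4) sN tQ) by (apply gst_nonneg; auto).
  assert (As : Rabs A = s^2*t) by exact HA.
  assert (Hz : forall u, 0 <= u -> gst (/e) (/e^4) u 0 = 0).
  { intros u Hu. unfold gst. replace (0^3) with 0 by ring. rewrite !Rmult_0_r.
    assert (0 <= / e * u^3) by (apply Rmult_le_pos; auto; apply pow_le; auto).
    unfold Rmin; repeat destruct Rle_dec; lra. }
  destruct (Rtotal_order Q 0) as [HQ|[HQ|HQ]].
  -
    rewrite (Rabs_left Q) in EQ by lra.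
    rewrite (posp_of_nonpos Q) by lra. rewrite Rabs_R0, cbrt_0, Hz by auto.
    rewrite (negp_of_nonpos Q) by lra. fold tQ.
    destruct (Rle_dec 0 q0) as [Hq|Hq].
    + rewrite (Rabs_right q0) in Et by lra.
      rewrite (Rabs_right A) in As by (apply Rle_ge; auto).
      assert (DQ : Rabs (tQ^3 - t^3) <= be^3*e^6).
      { rewrite EQ, Et, Eb. replace (- Q - q0) with (- (Q + q0)) by ring. rewrite Rabs_Ropp; auto. }
      pose proof (core s t sN tQ e al be S T He al0 be0 (conj s0 sS) (conj t0 tT) sN0 tQ0 DN DQ).
      replace (- 0 + gst (/ e) (/ e ^ 4) sN tQ - A) with (gst (/ e) (/ e ^ 4) sN tQ - s^2*t) by lra.
      lra.
    + rewrite (Rabs_left q0) in Et by lra.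
      assert (HQq : t^3 + tQ^3 <= be^3*e^6).
      { rewrite EQ, Et, Eb. rewrite Rabs_left in H3 by lra. lra. }
      pose proof (small s t sN tQ e al be S He be0 (conj s0 sS) t0 (conj sN0 sNb) tQ0 HQq).
      replace (- 0 + gst (/ e) (/ e ^ 4) sN tQ - A) with (gst (/ e) (/ e ^ 4) sN tQ + - A) by ring.
      eapply Rle_trans; [apply Rabs_triang|]. rewrite Rabs_Ropp, As, (Rabs_right (gst _ _ _ _)) by lra. lra.
  -
    subst Q. rewrite posp_of_nonpos, negp_of_nonneg by lra.
    rewrite Rabs_R0, cbrt_0.
    rewrite !Hz by (apply cbrt_nonneg, Rabs_pos).
    assert (HQq : t^3 + 0^3 <= be^3*e^6).
    { rewrite Et, Eb. replace (0 + q0) with q0 in H3 by ring. replace (0^3) with 0 by ring. lra. }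
    pose proof (small s t s 0 e al be S He be0 (conj s0 sS) t0 ltac:(lra) ltac:(lra) HQq).
    rewrite Hz in H by auto.
    replace (- 0 + 0 - A) with (- A) by ring. rewrite Rabs_Ropp, As. lra.
  -
    rewrite (Rabs_right Q) in EQ by lra.
    rewrite (posp_of_nonneg Q) by lra. fold tQ.
    rewrite (negp_of_nonneg Q) by lra. rewrite Rabs_R0, cbrt_0, Hz by auto.
    destruct (Rle_dec q0 0) as [Hq|Hq].
    + rewrite (Rabs_left1 q0) in Et by lra.
      rewrite (Rabs_left1 A) in As by auto.
      assert (DQ : Rabs (tQ^3 - t^3) <= be^3*e^6).
      { rewrite EQ, Et, Eb. replace (Q - - q0) with (Q + q0) by ring. auto. }
      pose proof (core s t sP tQ e al be S T He al0 be0 (conj s0 sS) (conj t0 tT) sP0 tQ0 DP DQ).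
      replace (- gst (/ e) (/ e ^ 4) sP tQ + 0 - A) with (- (gst (/ e) (/ e ^ 4) sP tQ - s^2*t)) by lra.
      rewrite Rabs_Ropp. lra.
    + rewrite (Rabs_right q0) in Et by lra.
      assert (HQq : t^3 + tQ^3 <= be^3*e^6).
      { rewrite EQ, Et, Eb. rewrite Rabs_right in H3 by lra. lra. }
      pose proof (small s t sP tQ e al be S He be0 (conj s0 sS) t0 (conj sP0 sPb) tQ0 HQq).
      replace (- gst (/ e) (/ e ^ 4) sP tQ + 0 - A) with (- gst (/ e) (/ e ^ 4) sP tQ + - A) by ring.
      eapply Rle_trans; [apply Rabs_triang|]. rewrite !Rabs_Ropp, As, (Rabs_right (gst _ _ _ _)) by lra. lra.
Qed.

Lemma loc_int a b z : a < z < b -> locally z (fun y => a < y < b).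
Proof. intros H. apply (open_and (fun y => a < y) (fun y => y < b)); [apply open_gt|apply open_lt|auto]. Qed.

Section S.
Variables (phi : R -> R) (a b : R).
Hypothesis Hs : forall (n : nat) (x : R), a < x < b -> ex_derive_n phi n x.

Lemma smooth_cont k y : a < y < b -> continuous (Derive_n phi k) y.
Proof. intros Hy. exact (ex_derive_continuous (Derive_n phi k) y (Hs (S k) y Hy)). Qed.

Lemma bound_on k c d : a < c -> d < b -> c <= d ->
  exists B, 0 <= B /\ forall y, c <= y <= d -> Rabs (Derive_n phi k y) <= B.
Proof.
  intros Hc Hd Hcd.
  destruct (continuity_ab_maj (fun y => Rabs (Derive_n phi k y)) c d Hcd) as [M [HM _]].
  { intros y Hy. apply continuity_pt_filterlim. apply continuous_Rabs_comp. apply smooth_cont. lra. }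
  exists (Rabs (Derive_n phi k M)). split; [apply Rabs_pos|]. auto.
Qed.

Lemma taylor_r x h : a < x -> x + h < b -> 0 < h ->
  (exists z, x < z < x+h /\ phi (x+h) = phi x + h * Derive_n phi 1 x + h^2/2 * Derive_n phi 2 z) /\
  (exists z, x < z < x+h /\ phi (x+h) = phi x + h * Derive_n phi 1 x + h^2/2 * Derive_n phi 2 x
                                       + h^3/6 * Derive_n phi 3 x + h^4/24 * Derive_n phi 4 z).
Proof.
  intros Hx Hxh Hh. split.
  - destruct (Taylor_Lagrange phi 1 x (x+h)) as [z [Hz E]]; [lra| intros; apply Hs; lra |].
    exists z. split; auto. rewrite E.
    cbn [sum_f_R0 Factorial.fact INR Nat.mul Nat.add pow]. change (Derive_n phi 0 x) with (phi x).
    replace (x + h - x) with h by ring. field.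
  - destruct (Taylor_Lagrange phi 3 x (x+h)) as [z [Hz E]]; [lra| intros; apply Hs; lra |].
    exists z. split; auto. rewrite E.
    cbn [sum_f_R0 Factorial.fact INR Nat.mul Nat.add pow]. change (Derive_n phi 0 x) with (phi x).
    replace (x + h - x) with h by ring. field.
Qed.

Lemma taylor_l x h : a < x - h -> x < b -> 0 < h ->
  (exists z, x - h < z < x /\ phi (x-h) = phi x - h * Derive_n phi 1 x + h^2/2 * Derive_n phi 2 z) /\
  (exists z, x - h < z < x /\ phi (x-h) = phi x - h * Derive_n phi 1 x + h^2/2 * Derive_n phi 2 x
                                       - h^3/6 * Derive_n phi 3 x + h^4/24 * Derive_n phi 4 z).
Proof.
  intros Hx Hxh Hh.
  set (g := fun y => phi (- y)).
  assert (HD : forall m t, a < - t < b -> Derive_n g m t = (-1)^m * Derive_n phi m (- t)).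
  { intros m t Ht. apply Derive_n_comp_opp.
    apply (filter_imp (fun y => a < y < b)); [intros; apply Hs; auto|]. apply loc_int; auto. }
  assert (HE : forall n t, - x <= t <= - x + h -> forall k, (k <= S n)%nat -> ex_derive_n g k t).
  { intros n t Ht k _. apply ex_derive_n_comp_opp.
    apply (filter_imp (fun y => a < y < b)); [intros; apply Hs; auto|]. apply loc_int; lra. }
  split.
  - destruct (Taylor_Lagrange g 1 (-x) (-x+h)) as [z [Hz E]]; [lra| apply HE |].
    exists (-z). split; [lra|].
    unfold g at 1 in E. replace (- (- x + h)) with (x - h) in E by ring. rewrite E.
    cbn [sum_f_R0 Factorial.fact INR Nat.mul Nat.add].
    rewrite (HD 0%nat (-x)), (HD 1%nat (-x)), (HD 2%nat z) by lra.
    change (Derive_n phi 0 (- - x)) with (phi (- - x)).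
    cbn [pow].
    replace (- x + h - - x) with h by ring. rewrite !Ropp_involutive. field.
  - destruct (Taylor_Lagrange g 3 (-x) (-x+h)) as [z [Hz E]]; [lra| apply HE |].
    exists (-z). split; [lra|].
    unfold g at 1 in E. replace (- (- x + h)) with (x - h) in E by ring. rewrite E.
    cbn [sum_f_R0 Factorial.fact INR Nat.mul Nat.add].
    rewrite (HD 0%nat (-x)), (HD 1%nat (-x)), (HD 2%nat (-x)), (HD 3%nat (-x)), (HD 4%nat z) by lra.
    change (Derive_n phi 0 (- - x)) with (phi (- - x)).
    cbn [pow].
    replace (- x + h - - x) with h by ring. rewrite !Ropp_involutive. field.
Qed.

End S.

Lemma accuracy phi a b : a < -1 -> 1 < b ->
  (forall (n : nat) (x : R), a < x < b -> ex_derive_n phi n x) ->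
  exists C h0, 0 < C /\ 0 < h0 /\ forall h x, 0 < h < h0 -> -1 < x < 1 ->
    Rabs (F1De h phi x - F1D phi x) <= C * Rpower h (2/3).
Proof.
  intros Ha Hb Hs.
  set (n0 := Rmin ((-1-a)/2) ((b-1)/2)).
  assert (n0p : 0 < n0) by (unfold n0, Rmin; destruct Rle_dec; lra).
  assert (n0a : n0 <= (-1-a)/2) by apply Rmin_l.
  assert (n0b : n0 <= (b-1)/2) by apply Rmin_r.
  destruct (bound_on phi a b Hs 1 (-1-n0) (1+n0)) as [B1 [B1p HB1]]; try lra.
  destruct (bound_on phi a b Hs 2 (-1-n0) (1+n0)) as [B2 [B2p HB2]]; try lra.
  destruct (bound_on phi a b Hs 4 (-1-n0) (1+n0)) as [B4 [B4p HB4]]; try lra.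
  assert (c1p : 0 <= B2/2) by lra. assert (c2p : 0 <= B4/12) by lra.
  pose proof (Cacc_nonneg (B2/2) (B4/12) B1 B2 c1p c2p B1p B2p) as HC.
  exists (Cacc (B2/2) (B4/12) B1 B2 + 1), (Rmin n0 1).
  split; [lra|]. split; [unfold Rmin; destruct Rle_dec; lra|].
  intros h x Hh Hx.
  assert (hn0 : h < n0) by (pose proof (Rmin_l n0 1); lra).
  assert (h1 : h < 1) by (pose proof (Rmin_r n0 1); lra).
  destruct (taylor_r phi a b Hs x h) as [[z1 [Hz1 E1]] [z3 [Hz3 E3]]]; try lra.
  destruct (taylor_l phi a b Hs x h) as [[z2 [Hz2 E2]] [z4 [Hz4 E4]]]; try lra.
  assert (Hf : Rabs (Dfwd h x (fun y => phi x - phi y) + Derive phi x) <= B2/2 * h).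
  { unfold Dfwd. change (Derive phi x) with (Derive_n phi 1 x). rewrite E1.
    replace ((phi x - (phi x + h * Derive_n phi 1 x + h ^ 2 / 2 * Derive_n phi 2 z1)) / h + Derive_n phi 1 x)
      with (- (h/2) * Derive_n phi 2 z1) by (field; lra).
    rewrite Rabs_mult, Rabs_Ropp, Rabs_right by lra.
    replace (B2/2*h) with (h/2*B2) by field. apply Rmult_le_compat_l; [lra|]. apply HB2. lra. }
  assert (Hbk : Rabs (Dbwd h x (fun y => phi x - phi y) - Derive phi x) <= B2/2 * h).
  { unfold Dbwd. change (Derive phi x) with (Derive_n phi 1 x). rewrite E2.
    replace ((phi x - (phi x - h * Derive_n phi 1 x + h ^ 2 / 2 * Derive_n phi 2 z2)) / h - Derive_n phi 1 x)
      with (- (h/2) * Derive_n phi 2 z2) by (field; lra).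
    rewrite Rabs_mult, Rabs_Ropp, Rabs_right by lra.
    replace (B2/2*h) with (h/2*B2) by field. apply Rmult_le_compat_l; [lra|]. apply HB2. lra. }
  assert (Hq : Rabs (- uxx h x (fun y => phi x - phi y) + Derive_n phi 2 x) <= B4/12 * h^2).
  { unfold uxx. rewrite E3, E4.
    replace (- (- ((phi x - (phi x + h * Derive_n phi 1 x + h ^ 2 / 2 * Derive_n phi 2 x +
               h ^ 3 / 6 * Derive_n phi 3 x + h ^ 4 / 24 * Derive_n phi 4 z3)) +
            (phi x - (phi x - h * Derive_n phi 1 x + h ^ 2 / 2 * Derive_n phi 2 x -
               h ^ 3 / 6 * Derive_n phi 3 x + h ^ 4 / 24 * Derive_n phi 4 z4))) / h ^ 2) +
            Derive_n phi 2 x)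
      with (- (h^2/24) * (Derive_n phi 4 z3 + Derive_n phi 4 z4)) by (field; lra).
    assert (0 < h^2) by (apply pow_lt; lra).
    rewrite Rabs_mult, Rabs_Ropp, (Rabs_right (h^2/24)) by lra.
    assert (Rabs (Derive_n phi 4 z3 + Derive_n phi 4 z4) <= 2*B4).
    { eapply Rle_trans; [apply Rabs_triang|]. assert (Rabs (Derive_n phi 4 z3) <= B4) by (apply HB4; lra).
      assert (Rabs (Derive_n phi 4 z4) <= B4) by (apply HB4; lra). lra. }
    replace (B4/12*h^2) with (h^2/24*(2*B4)) by field. apply Rmult_le_compat_l; lra. }
  assert (Hp0 : Rabs (Derive phi x) <= B1) by (apply (HB1 x); lra).
  assert (Hq0 : Rabs (Derive_n phi 2 x) <= B2) by (apply HB2; lra).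
  destruct (eta_facts h) as [e [He [He3 [HR [HK [HL _]]]]]]; [lra|].
  assert (e1 : e <= 1) by (apply cube_le_inv; lra).
  unfold F1De, F1D. rewrite HK, HL, HR. subst h.
  eapply Rle_trans.
  - apply (acc_scheme e x (phi x) (fun y => phi x - phi y) (Derive phi x) (Derive_n phi 2 x) (B2/2) (B4/12) B1 B2); auto.
    replace (e^6) with ((e^3)^2) by ring. auto.
  - assert (0 <= e^2) by apply pow2_ge_0. rewrite Rmult_plus_distr_r, Rmult_1_l. lra.
Qed.


Lemma cbrt_holder u w : Rabs (cbrt u - cbrt w)^3 <= 4 * Rabs (u - w).
Proof.
  rewrite <- (cbrt_cube u) at 2. rewrite <- (cbrt_cube w) at 2.
  set (s := cbrt u). set (t := cbrt w).
  replace (s^3 - t^3) with ((s - t) * (s^2 + s*t + t^2)) by ring.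
  rewrite Rabs_mult.
  assert (E : s^2 + s*t + t^2 = 3/4*(s+t)^2 + 1/4*(s-t)^2) by field.
  assert (0 <= (s+t)^2) by apply pow2_ge_0.
  assert (Hq : 1/4 * (s-t)^2 <= s^2 + s*t + t^2) by lra.
  assert (0 <= (s-t)^2) by apply pow2_ge_0.
  rewrite (Rabs_right (s^2 + s*t + t^2)) by lra.
  rewrite <- (pow2_abs (s - t)) in Hq.
  assert (d0 : 0 <= Rabs (s - t)) by apply Rabs_pos.
  set (d := Rabs (s - t)) in *.
  assert (d * (1/4*d^2) <= d * (s^2 + s*t + t^2)) by (apply Rmult_le_compat_l; auto).
  replace (d^3) with (4 * (d * (1/4*d^2))) by field. lra.
Qed.

Lemma pow2_sq_aux (u : R) : u^2 = u*u.
Proof. ring. Qed.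

Lemma consistency phi a b : a < -1 -> 1 < b ->
  (forall (n : nat) (x : R), a < x < b -> ex_derive_n phi n x) ->
  forall C h0, 0 < C -> 0 < h0 ->
  (forall h x, 0 < h < h0 -> -1 < x < 1 -> Rabs (F1De h phi x - F1D phi x) <= C * Rpower h (2/3)) ->
  forall x : R, -1 < x < 1 ->
  forall eps : R, 0 < eps ->
  exists delta : R, 0 < delta /\
    forall h y : R, 0 < h < delta -> grid_point h y -> Rabs (y - x) < delta ->
      Rabs (F1De h phi y - F1D phi x) < eps.
Proof.
  intros Ha Hb Hs C h0 HC Hh0 Hacc x Hx eps Heps.
  assert (c1 : continuity_pt (Derive_n phi 1) x)
    by (apply continuity_pt_filterlim; apply (smooth_cont phi a b Hs); lra).
  assert (c2 : continuity_pt (Derive_n phi 2) x)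
    by (apply continuity_pt_filterlim; apply (smooth_cont phi a b Hs); lra).
  assert (c11 : continuity_pt (fun y => Derive_n phi 1 y * Derive_n phi 1 y) x)
    by (apply (continuity_pt_mult (Derive_n phi 1) (Derive_n phi 1)); auto).
  assert (cw : continuity_pt (fun y => (Derive_n phi 1 y * Derive_n phi 1 y) * Derive_n phi 2 y) x)
    by (apply (continuity_pt_mult (fun y => Derive_n phi 1 y * Derive_n phi 1 y) (Derive_n phi 2)); auto).
  set (ep := (eps/2)^3/4).
  assert (ep0 : 0 < ep) by (unfold ep; apply Rdiv_lt_0_compat; [apply pow_lt|]; lra).
  destruct (cw ep ep0) as [alp [Halp Hw]].
  set (e := Rmin 1 (eps/(2*C))).
  assert (e0 : 0 < e) by (unfold e, Rmin; destruct Rle_dec; try lra; apply Rdiv_lt_0_compat; lra).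
  assert (e1 : e <= 1) by apply Rmin_l.
  assert (e2 : e <= eps/(2*C)) by apply Rmin_r.
  exists (Rmin alp (Rmin h0 (e^3))).
  assert (e3 : 0 < e^3) by (apply pow_lt; auto).
  split. { unfold Rmin; repeat destruct Rle_dec; lra. }
  intros h y Hh Hy Hyx.
  pose proof (Rmin_l alp (Rmin h0 (e^3))). pose proof (Rmin_r alp (Rmin h0 (e^3))).
  pose proof (Rmin_l h0 (e^3)). pose proof (Rmin_r h0 (e^3)).
  destruct Hy as [Hy1 Hy2].
  assert (A1 : Rabs (F1De h phi y - F1D phi y) <= C * Rpower h (2/3)) by (apply Hacc; lra).
  destruct (eta_facts h) as [et [Het [Het3 [HR _]]]]; [lra|].
  rewrite HR in A1.
  assert (et_e : et < e) by (apply cube_lt_inv; lra).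
  assert (et2 : et^2 < e) by (assert (et*et <= et*1) by (apply Rmult_le_compat_l; lra); simpl; lra).
  assert (A2 : C * et^2 < eps/2).
  { assert (C * et^2 < C * e) by (apply Rmult_lt_compat_l; auto).
    assert (C * e <= C * (eps/(2*C))) by (apply Rmult_le_compat_l; lra).
    replace (C * (eps/(2*C))) with (eps/2) in H4 by (field; lra). lra. }
  assert (A3 : Rabs (F1D phi y - F1D phi x) < eps/2).
  { unfold F1D.
    change (Derive phi y) with (Derive_n phi 1 y). change (Derive phi x) with (Derive_n phi 1 x).
    rewrite !pow2_sq_aux.
    set (wy := (Derive_n phi 1 y * Derive_n phi 1 y) * Derive_n phi 2 y).
    set (wx := (Derive_n phi 1 x * Derive_n phi 1 x) * Derive_n phi 2 x).
    assert (Hd : Rabs (wy - wx) < ep).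
    { destruct (Req_dec y x) as [Exy|Exy].
      - subst y. unfold wy, wx. rewrite Rminus_diag, Rabs_R0. auto.
      - apply (Hw y). split. split; [exact I| auto]. change (Rabs (y - x) < alp). lra. }
    apply cube_lt_inv.
    eapply Rle_lt_trans; [apply cbrt_holder|].
    replace ((eps/2)^3) with (4 * ep) by (unfold ep; field). lra. }
  replace (F1De h phi y - F1D phi x) with ((F1De h phi y - F1D phi y) + (F1D phi y - F1D phi x)) by ring.
  eapply Rle_lt_trans; [apply Rabs_triang|]. lra.
Qed.

Theorem mainTheorem8 :
  (forall (phi : R -> R) (a b : R),
      a < -1 -> 1 < b ->
      (forall (n : nat) (x : R), a < x < b -> ex_derive_n phi n x) ->
      (forall x : R, -1 < x < 1 ->
         forall eps : R, 0 < eps ->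
         exists delta : R, 0 < delta /\
           forall h y : R, 0 < h < delta -> grid_point h y -> Rabs (y - x) < delta ->
             Rabs (F1De h phi y - F1D phi x) < eps)
      /\
      (exists C h0 : R, 0 < C /\ 0 < h0 /\
         forall h x : R, 0 < h < h0 -> grid_point h x ->
           Rabs (F1De h phi x - F1D phi x) <= C * Rpower h (2/3)))
  /\
  (forall h : R, 0 < h ->
     forall (x r s : R) (v w : R -> R) (M : R),
       grid_point h x ->
       (forall y : R, on_lattice h y -> Rabs (v y - w y) <= M) ->
       Rabs (F1De_op (Kh h) (Lh h) h x r v - F1De_op (Kh h) (Lh h) h x s w)
         <= Ch h * Rmax (Rabs (r - s)) M).
Proof.
  split.
  - intros phi a b Ha Hb Hs.
    destruct (accuracy phi a b Ha Hb Hs) as [C [h0 [HC [Hh0 Hacc]]]].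
    split.
    + apply (consistency phi a b Ha Hb Hs C h0 HC Hh0 Hacc).
    + exists C, h0. repeat split; auto. intros h x Hh [Hx _]. apply Hacc; auto.
  - apply lip_part.
Qed.
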